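(* Let $M$ be an entrywise nonnegative $m\times n$ real matrix and let $M=AW$ be a stable nonnegative matrix factorization with $A\in\mathbb{R}_{\ge0}^{m\times r}$, $W\in\mathbb{R}_{\ge0}^{r\times n}$. Let $s=\mathrm{rank}(A)$, let $U\subseteq[m]$ be a set of $s$ linearly independent rows of $A$, and let $B_1,\dots,B_p$ be the ensemble of $A$ at $U$. Then for each column index $i$, $W_i$ is contained in the set $\{B_1M_i^U,\dots,B_pM_i^U\}$.
   Context: Notation: $M_i$ is the $i$-th column, $M^j$ the $j$-th row; $A_S$ denotes columns in $S$, $A^U$ rows in $U$, $M_i^U$ the entries of $M_i$ in rows $U$. $\mathrm{aff}(A)=\{\sum_i\alpha_iA_i:\alpha_i\ge0\}$. A subset $S\subseteq[r]$ of columns of $A$ is admissible for $v\in\mathbb{R}^m$ if $v\in\mathrm{aff}(A_S)$; a subset $T\subseteq[r]$ of rows of $W$ is admissible for a row vector $u$ if $u$ is a nonnegative combination of the rows of $W^T$. Lexicographic ordering on subsets of $[r]$: if $|S|<|T|$ then $S$ precedes $T$; equal-size subsets compared by standard lexicographic order. $M=AW$ is stable if, with $S_i$ the lexicographically first subset of columns of $A$ admissible for $M_i$ and $T_j$ the lexicographically first subset of rows of $W$ admissible for $M^j$, each $W_i$ is supported in $S_i$ and each row $A^j$ is supported in $T_j$. Ensemble: let $S_1,\dots,S_p$ be all sets of $s$ linearly independent columns of $A$, in lexicographic order; $B_k$ is the $r\times s$ matrix that is zero on rows outside $S_k$ and whose restriction to rows $S_k$ equals $(A^U_{S_k})^{-1}$.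 *)

(* Defs.v *)
From HB Require Import structures.
From mathcomp Require Import all_boot all_order all_algebra.
Set Implicit Arguments. Unset Strict Implicit. Unset Printing Implicit Defensive.
Import Order.TTheory GRing.Theory Num.Theory.
Local Open Scope ring_scope.

Section NMF.
Variable R : realFieldType.

Definition nonneg_mx (p q : nat) (X : 'M[R]_(p, q)) : Prop :=
  forall i j, 0 <= X i j.

Fixpoint seq_lexlt (s t : seq nat) : bool :=
  match s, t with
  | x :: s', y :: t' => (x < y)%N || ((x == y) && seq_lexlt s' t')
  | _, _ => false
  end.

Definition sorted_elems (k : nat) (S : {set 'I_k}) : seq nat :=
  sort leq [seq val x | x <- enum S].

Definition subset_lexlt (k : nat) (S T : {set 'I_k}) : Prop :=
  (#|S| < #|T|)%N \/ (#|S| = #|T| /\ seq_lexlt (sorted_elems S) (sorted_elems T)).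

Definition lex_first (k : nat) (P : {set 'I_k} -> Prop) (S : {set 'I_k}) : Prop :=
  P S /\ forall T, P T -> T <> S -> subset_lexlt S T.

Definition admissible_cols (m r : nat) (A : 'M[R]_(m, r)) (S : {set 'I_r})
  (v : 'cV[R]_m) : Prop :=
  exists alpha : 'I_r -> R, (forall i, 0 <= alpha i) /\
    v = \sum_(i in S) alpha i *: col i A.

Definition admissible_rows (r n : nat) (W : 'M[R]_(r, n)) (T : {set 'I_r})
  (u : 'rV[R]_n) : Prop :=
  exists beta : 'I_r -> R, (forall j, 0 <= beta j) /\
    u = \sum_(j in T) beta j *: row j W.

Definition stable_fact (m n r : nat) (M : 'M[R]_(m, n)) (A : 'M[R]_(m, r))
  (W : 'M[R]_(r, n)) : Prop :=
  M = A *m W /\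
  (forall (i : 'I_n) (S : {set 'I_r}),
     lex_first (fun S => admissible_cols A S (col i M)) S ->
     forall k, k \notin S -> W k i = 0) /\
  (forall (j : 'I_m) (T : {set 'I_r}),
     lex_first (fun T => admissible_rows W T (row j M)) T ->
     forall k, k \notin T -> A j k = 0).

Definition rows_of (m r : nat) (A : 'M[R]_(m, r)) (U : {set 'I_m}) : 'M[R]_(#|U|, r) :=
  \matrix_(k < #|U|, j < r) A (enum_val k) j.

Definition cols_of (m r : nat) (A : 'M[R]_(m, r)) (S : {set 'I_r}) : 'M[R]_(m, #|S|) :=
  \matrix_(i < m, k < #|S|) A i (enum_val k).

Definition colU (m n : nat) (M : 'M[R]_(m, n)) (U : {set 'I_m}) (i : 'I_n) : 'cV[R]_#|U| :=
  \col_(k < #|U|) M (enum_val k) i.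

Definition AUS (m r : nat) (A : 'M[R]_(m, r)) (U : {set 'I_m}) (S : {set 'I_r})
  (hS : #|S| = #|U|) : 'M[R]_#|U| :=
  \matrix_(k < #|U|, l < #|U|) A (enum_val k) (enum_val (cast_ord (esym hS) l)).

Definition embedS (r u : nat) (S : {set 'I_r}) (hS : #|S| = u) : 'M[R]_(r, u) :=
  \matrix_(j < r, l < u) (j == enum_val (cast_ord (esym hS) l))%:R.

(* the ensemble matrix B_S: zero on rows outside S, equal to (A^U_S)^{-1} on rows S *)
Definition ensemble_mx (m r : nat) (A : 'M[R]_(m, r)) (U : {set 'I_m}) (S : {set 'I_r})
  (hS : #|S| = #|U|) : 'M[R]_(r, #|U|) :=
  embedS hS *m invmx (AUS A hS).

Definition lin_indep_cols (m r : nat) (A : 'M[R]_(m, r)) (S : {set 'I_r}) : Prop :=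
  row_free (cols_of A S)^T.

End NMF.

(* Main.v *)
Require Import Defs.
From HB Require Import structures.
From mathcomp Require Import all_boot all_order all_algebra.
From mathcomp Require Import zify.
From Stdlib Require Import Classical.
Import Order.TTheory GRing.Theory Num.Theory.
Set Implicit Arguments. Unset Strict Implicit. Unset Printing Implicit Defensive.

Fixpoint numb (b : nat) (s : seq nat) : nat :=
  match s with [::] => 0%N | x :: s' => (x * b ^ size s' + numb b s')%N end.

Lemma numb_lt b s : all (fun x => x < b)%N s -> (numb b s < b ^ size s)%N.
Proof.
elim: s => [|x s IH] /=; first by rewrite expn0.
move=> /andP[hx hs]; have := IH hs; rewrite expnS => h.
have: (x.+1 * b ^ size s <= b * b ^ size s)%N by rewrite leq_mul2r hx orbT.
rewrite mulSn; lia.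
Qed.

Lemma numb_lex b s t : size s = size t -> all (fun x => x < b)%N s ->
  all (fun x => x < b)%N t -> (numb b s < numb b t)%N -> seq_lexlt s t.
Proof.
elim: s t => [|x s IH] [|y t] //=.
move=> [hst] /andP[hx hs] /andP[hy ht] hlt.
have h1 := numb_lt hs; have h2 := numb_lt ht. rewrite -hst in h2 hlt.
case: (ltngtP x y) => hxy //=.
- exfalso. have: (y.+1 * b ^ size s <= x * b ^ size s)%N by rewrite leq_mul2r hxy orbT.
  rewrite mulSn; lia.
- subst y. apply: IH => //. lia.
Qed.

Lemma numb_inj b s t : size s = size t -> all (fun x => x < b)%N s ->
  all (fun x => x < b)%N t -> numb b s = numb b t -> s = t.
Proof.
elim: s t => [|x s IH] [|y t] //=.
move=> [hst] /andP[hx hs] /andP[hy ht] he.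
have h1 := numb_lt hs; have h2 := numb_lt ht. rewrite -hst in h2 he.
case: (ltngtP x y) => hxy.
- exfalso. have: (x.+1 * b ^ size s <= y * b ^ size s)%N by rewrite leq_mul2r hxy orbT.
  rewrite mulSn; lia.
- exfalso. have: (y.+1 * b ^ size s <= x * b ^ size s)%N by rewrite leq_mul2r hxy orbT.
  rewrite mulSn; lia.
- subst y. congr (_ :: _); apply: IH => //. lia.
Qed.

Section Key.
Variable r : nat.

Definition skey (S : {set 'I_r}) : nat :=
  (#|S| * r.+1 ^ r + numb r.+1 (sorted_elems S))%N.

Lemma size_se (S : {set 'I_r}) : size (sorted_elems S) = #|S|.
Proof. by rewrite /sorted_elems size_sort size_map cardE. Qed.

Lemma all_se (S : {set 'I_r}) : all (fun x => x < r.+1)%N (sorted_elems S).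
Proof.
apply/allP => x; rewrite /sorted_elems mem_sort => /mapP[y _ ->].
exact: ltnW (ltn_ord y).
Qed.

Lemma mem_se (S : {set 'I_r}) (x : 'I_r) : (val x \in sorted_elems S) = (x \in S).
Proof. by rewrite /sorted_elems mem_sort (mem_map val_inj) mem_enum. Qed.

Lemma numb_se_lt (S : {set 'I_r}) : (numb r.+1 (sorted_elems S) < r.+1 ^ r)%N.
Proof.
apply: (leq_trans (numb_lt (all_se S))); rewrite size_se leq_pexp2l //.
by rewrite -[X in (_ <= X)%N](card_ord r) max_card.
Qed.

Lemma skey_lt (S T : {set 'I_r}) : (skey S < skey T)%N -> subset_lexlt S T.
Proof.
rewrite /skey => h; have h1 := numb_se_lt S; have h2 := numb_se_lt T.
case: (ltngtP #|S| #|T|) => hc; [by left | exfalso | right; split => //].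
- have: (#|T|.+1 * r.+1 ^ r <= #|S| * r.+1 ^ r)%N by rewrite leq_mul2r hc orbT.
  rewrite mulSn; lia.
- apply: (@numb_lex r.+1); rewrite ?size_se ?all_se //. rewrite hc in h; lia.
Qed.

Lemma skey_inj (S T : {set 'I_r}) : skey S = skey T -> S = T.
Proof.
rewrite /skey => h; have h1 := numb_se_lt S; have h2 := numb_se_lt T.
have hc : #|S| = #|T|.
  case: (ltngtP #|S| #|T|) => hc //; exfalso.
  - have: (#|S|.+1 * r.+1 ^ r <= #|T| * r.+1 ^ r)%N by rewrite leq_mul2r hc orbT.
    rewrite mulSn; lia.
  - have: (#|T|.+1 * r.+1 ^ r <= #|S| * r.+1 ^ r)%N by rewrite leq_mul2r hc orbT.
    rewrite mulSn; lia.
have he : sorted_elems S = sorted_elems T.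
  apply: (@numb_inj r.+1); rewrite ?size_se ?all_se //. rewrite hc in h; lia.
by apply/setP => x; rewrite -!mem_se he.
Qed.

Lemma lex_first_exists (P : {set 'I_r} -> Prop) S0 : P S0 -> exists S, lex_first P S.
Proof.
move=> hS0.
suff: exists S, P S /\ forall T, P T -> (skey S <= skey T)%N.
  move=> [S [hS hmin]]; exists S; split => // T hT hne.
  apply: skey_lt; have := hmin T hT; rewrite leq_eqVlt => /orP[/eqP h|//].
  by exfalso; apply: hne; apply: skey_inj.
have: exists S, P S /\ (skey S <= skey S0)%N by exists S0.
elim: (skey S0) => [|n IH] [S [hS hle]].
  by exists S; split => // T _; move: hle; rewrite leqn0 => /eqP ->.
case: (classic (exists T, P T /\ (skey T <= n)%N)) => [hT|hT]; first exact: IH.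
exists S; split => // T hPT; apply: (leq_trans hle).
case: (leqP (skey T) n) => // h; exfalso; apply: hT; by exists T.
Qed.
End Key.

Local Open Scope ring_scope.

Section LA.
Variable R : realFieldType.
Variables (m r : nat) (A : 'M[R]_(m, r)).

Lemma mul_col_sum (c : 'cV[R]_r) : A *m c = \sum_k c k 0 *: col k A.
Proof.
apply/matrixP => a b; rewrite !mxE summxE; apply: eq_bigr => k _.
by rewrite !mxE (ord1 b) mulrC.
Qed.

Lemma cols_of_mul (S : {set 'I_r}) (x : 'cV[R]_#|S|) :
  cols_of A S *m x = \sum_l x l 0 *: col (enum_val l) A.
Proof.
apply/matrixP => a b; rewrite !mxE summxE; apply: eq_bigr => k _.
by rewrite !mxE (ord1 b) mulrC.
Qed.

Lemma indepP (S : {set 'I_r}) : lin_indep_cols A S <->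
  (forall x : 'cV[R]_#|S|, cols_of A S *m x = 0 -> x = 0).
Proof.
split.
- move=> hf x hx; apply: trmx_inj; rewrite trmx0.
  apply: (row_free_inj hf); rewrite mul0mx -trmx_mul hx trmx0 //.
- move=> h; apply: inj_row_free => v hv.
  apply: trmx_inj; rewrite trmx0; apply: h.
  by apply: trmx_inj; rewrite trmx_mul trmxK hv trmx0.
Qed.

Lemma indep_supp (S : {set 'I_r}) : lin_indep_cols A S -> forall z : 'cV[R]_r,
  (forall j, j \notin S -> z j 0 = 0) -> A *m z = 0 -> z = 0.
Proof.
move=> /indepP h z hz hAz.
pose x : 'cV[R]_#|S| := \col_l z (enum_val l) 0.
have hx : cols_of A S *m x = A *m z.
  rewrite cols_of_mul mul_col_sum (bigID (mem S)) /= [X in _ = _ + X]big1; last first.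
    by move=> j hj; rewrite hz // scale0r.
  rewrite addr0 [in RHS]big_enum_val /=.
  by apply: eq_bigr => l _; rewrite mxE.
have := h x; rewrite hx hAz => /(_ erefl) hx0.
apply/matrixP => j b; rewrite (ord1 b) mxE.
case: (boolP (j \in S)) => hj; last exact: hz.
have := congr1 (fun X : 'cV_#|S| => X (enum_rank_in hj j) 0) hx0.
by rewrite !mxE enum_rankK_in.
Qed.

Lemma carath (S : {set 'I_r}) (v : 'cV[R]_m) : admissible_cols A S v -> ~ lin_indep_cols A S ->
  exists T, admissible_cols A T v /\ (#|T| < #|S|)%N.
Proof.
move=> [alpha [ha hv]] hni.
have [x [hx hx0]] : exists x : 'cV[R]_#|S|, cols_of A S *m x = 0 /\ x != 0.
  apply: NNPP => hne; apply: hni; apply/indepP => x hx.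
  apply/eqP; apply: negbNE; apply/negP => hn; apply: hne; by exists x.
have [x' [hx' [l1 hl1]]] : exists x' : 'cV[R]_#|S|, cols_of A S *m x' = 0 /\
    exists l1, 0 < x' l1 0.
  have [l1 hl1] : exists l1, x l1 0 != 0.
    apply: NNPP => hne; move/eqP: hx0; apply; apply/matrixP => a b.
    rewrite (ord1 b) mxE; apply/eqP; apply: negbNE; apply/negP => hn; apply: hne.
    by exists a.
  case: (ltrgtP (x l1 0) 0) => hs; last by move: hl1; rewrite hs eqxx.
  + exists (- x); split; first by rewrite mulmxN hx oppr0.
    by exists l1; rewrite mxE oppr_gt0.
  + by exists x; split => //; exists l1.
pose F := fun l : 'I_#|S| => alpha (enum_val l) / x' l 0.
case: (arg_minP F (P := fun l => 0 < x' l 0) hl1) => l0 hl0 hmin.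
set t := F l0.
have ht0 : 0 <= t by rewrite /t /F divr_ge0 // ltW.
have H0 : enum_val l0 \in S := enum_valP l0.
pose gam := fun j => if j \in S then x' (enum_rank_in H0 j) 0 else 0.
pose beta := fun j => alpha j - t * gam j.
exists (S :\ enum_val l0); split; last by rewrite (cardsD1 (enum_val l0) S) H0.
exists beta; split.
  move=> j; rewrite /beta /gam; case: ifP => hj; last by rewrite mulr0 subr0.
  rewrite subr_ge0; set l := enum_rank_in H0 j.
  have hjl : enum_val l = j by rewrite /l enum_rankK_in.
  case: (ltrP 0 (x' l 0)) => hp.
    have := hmin l hp; rewrite /F hjl -/t => hle.
    by rewrite -(ler_pdivlMr _ _ hp).
  by apply: (le_trans _ (ha j)); rewrite mulr_ge0_le0.
have hb0 : beta (enum_val l0) = 0.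
  rewrite /beta /gam H0 enum_valK_in /t /F divfK ?subrr //.
  by rewrite gt_eqF.
have hsum : \sum_(j in S) gam j *: col j A = 0.
  rewrite [in LHS]big_enum_val /=; rewrite -[in RHS]hx' cols_of_mul.
  by apply: eq_bigr => l _; rewrite /gam enum_valP enum_valK_in.
have -> : \sum_(j in S :\ enum_val l0) beta j *: col j A =
          \sum_(j in S) beta j *: col j A.
  by rewrite (big_setD1 _ H0) hb0 scale0r /= add0r.
have -> : \sum_(j in S) beta j *: col j A =
   \sum_(j in S) alpha j *: col j A - t *: \sum_(j in S) gam j *: col j A.
  rewrite scaler_sumr -sumrB; apply: eq_bigr => j _.
  by rewrite /beta scalerBl scalerA.
by rewrite hsum scaler0 subr0.
Qed.

Lemma lex_first_indep (v : 'cV[R]_m) (S : {set 'I_r}) :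
  lex_first (fun S => admissible_cols A S v) S -> lin_indep_cols A S.
Proof.
move=> [hS hmin]; apply: NNPP => hni.
have [T [hT hlt]] := carath hS hni.
have hne : T <> S by move=> e; move: hlt; rewrite e ltnn.
case: (hmin T hT hne) => [h | [h _]]; lia.
Qed.


Lemma row_XS (S : {set 'I_r}) l : row l (cols_of A S)^T = row (enum_val l) A^T.
Proof. by apply/matrixP => a b; rewrite !mxE. Qed.

Lemma XS_sub (S : {set 'I_r}) : ((cols_of A S)^T <= A^T)%MS.
Proof. by apply/row_subP => l; rewrite row_XS row_sub. Qed.

Lemma row_in_XS (S : {set 'I_r}) k : k \in S -> (row k A^T <= (cols_of A S)^T)%MS.
Proof.
move=> hk; rewrite -(enum_rankK_in hk hk) -row_XS; exact: row_sub.
Qed.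

Lemma indep_rank (S : {set 'I_r}) : lin_indep_cols A S -> \rank (cols_of A S)^T = #|S|.
Proof. by move/eqP. Qed.

Lemma indep_le (S : {set 'I_r}) : lin_indep_cols A S -> (#|S| <= \rank A)%N.
Proof. move=> h; rewrite -(indep_rank h) -[\rank A]mxrank_tr; exact: mxrankS (XS_sub S). Qed.

Lemma extend_ind n : forall (S : {set 'I_r}), (\rank A - #|S|)%N = n -> lin_indep_cols A S ->
  exists S' : {set 'I_r}, S \subset S' /\ lin_indep_cols A S' /\ #|S'| = \rank A.
Proof.
elim: n => [|n IH] S hn hS.
  exists S; split => //; split => //; have := indep_le hS; lia.
have hlt : (#|S| < \rank A)%N by lia.
have hns : ~~ (A^T <= (cols_of A S)^T)%MS.
  apply/negP => h; have := mxrankS h; rewrite mxrank_tr indep_rank //; lia.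
have [k hk] := row_subPn hns.
have hkS : k \notin S by apply/negP => hk'; move: hk; rewrite row_in_XS.
set S1 := k |: S.
have hsub : S \subset S1 by apply/subsetP => j hj; by rewrite /S1 !inE hj orbT.
have hc1 : #|S1| = #|S|.+1 by rewrite /S1 cardsU1 hkS.
have hS1 : lin_indep_cols A S1.
  have hle : ((cols_of A S)^T <= (cols_of A S1)^T)%MS.
    apply/row_subP => l; rewrite row_XS; apply: row_in_XS.
    exact: (subsetP hsub) (enum_valP l).
  have hnle : ~~ ((cols_of A S1)^T <= (cols_of A S)^T)%MS.
    apply/negP => h; move: hk; rewrite (submx_trans _ h) //.
    by apply: row_in_XS; rewrite /S1 setU11.
  have hr := rank_ltmx (A := (cols_of A S)^T) (B := (cols_of A S1)^T).
  rewrite ltmxE hle hnle indep_rank // in hr.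
  have := hr erefl; have := rank_leq_row (cols_of A S1)^T.
  rewrite /lin_indep_cols /row_free => h1 h2; apply/eqP; apply/eqP; rewrite eqn_leq h1 /=; move: h2; rewrite -ltnS -hc1 ltnS; done.
have [S' [h1 [h2 h3]]] := IH S1 ltac:(by rewrite hc1 subnS hn) hS1.
exists S'; split => //; exact: subset_trans hsub h1.
Qed.


Section Ens.
Variables (U : {set 'I_m}) (S : {set 'I_r}) (hS : #|S| = #|U|).
Let ev' (l : 'I_#|U|) : 'I_r := enum_val (cast_ord (esym hS) l).
Let E := @embedS R _ _ S hS.

Lemma ev'_in l : ev' l \in S.
Proof. exact: enum_valP. Qed.

Lemma ev'_inj : injective ev'.
Proof. move=> a b /enum_val_inj h; exact: cast_ord_inj h. Qed.

Lemma Ey_at (y : 'cV[R]_#|U|) l : (E *m y) (ev' l) 0 = y l 0.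
Proof.
rewrite mxE (bigD1 l) //= mxE eqxx mul1r big1 ?addr0 // => l' hl'.
rewrite mxE; case: eqP => [/ev'_inj h|_]; last by rewrite mul0r.
by move: hl'; rewrite h eqxx.
Qed.

Lemma Ey_out (y : 'cV[R]_#|U|) j : j \notin S -> (E *m y) j 0 = 0.
Proof.
move=> hj; rewrite mxE big1 // => l _; rewrite mxE.
case: eqP => [h|_]; last by rewrite mul0r.
by move: hj; rewrite h enum_valP.
Qed.

Lemma w_eq (w : 'cV[R]_r) : (forall j, j \notin S -> w j 0 = 0) ->
  w = E *m \col_l w (ev' l) 0.
Proof.
move=> hw; apply/matrixP => j b; rewrite (ord1 b).
case: (boolP (j \in S)) => hj; last by rewrite Ey_out // hw.
have -> : j = ev' (cast_ord hS (enum_rank_in hj j)).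
  by rewrite /ev' cast_ordK enum_rankK_in.
by rewrite Ey_at mxE.
Qed.

Lemma AUS_eq : AUS A hS = rows_of A U *m E.
Proof.
apply/matrixP => k l; rewrite !mxE (bigD1 (ev' l)) //= !mxE eqxx mulr1.
rewrite big1 ?addr0 // => j hj; rewrite !mxE.
by rewrite (negbTE hj) mulr0.
Qed.

Lemma ens_eq (hU : #|U| = \rank A) (hUind : row_free (rows_of A U))
  (hSi : lin_indep_cols A S) (w : 'cV[R]_r) :
  (forall j, j \notin S -> w j 0 = 0) ->
  w = ensemble_mx A hS *m (\col_k (A *m w) (enum_val k) 0).
Proof.
move=> hw.
set RU := rows_of A U.
have hRA : (RU <= A)%MS.
  apply/row_subP => k; have -> : row k RU = row (enum_val k) A.
    by apply/matrixP => a b; rewrite !mxE.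
  exact: row_sub.
have hAR : (A <= RU)%MS.
  have := geq_leqif (mxrank_leqif_eq hRA).
  rewrite -hU (eqP hUind) leqnn => /esym/andP[_ ->] //.
have [C hC] := submxP hAR.
have hunit : AUS A hS \in unitmx.
  rewrite -unitmx_tr -row_free_unit; apply: inj_row_free => v hv.
  have h1 : AUS A hS *m v^T = 0 by apply: trmx_inj; rewrite trmx_mul trmxK hv trmx0.
  have hz : E *m v^T = 0.
    apply: (indep_supp hSi); first by move=> j hj; rewrite Ey_out.
    rewrite hC -mulmxA [RU *m _]mulmxA /RU -AUS_eq h1 !mulmx0 //.
  apply: trmx_inj; rewrite trmx0; apply/matrixP => l b; rewrite (ord1 b).
  by rewrite -Ey_at hz !mxE.
have hc : \col_k (A *m w) (enum_val k) 0 = AUS A hS *m \col_l w (ev' l) 0.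
  rewrite AUS_eq -mulmxA -w_eq //.
  by apply/matrixP => k b; rewrite (ord1 b) !mxE; apply: eq_bigr => j _; rewrite !mxE.
rewrite hc /ensemble_mx -mulmxA mulKmx //; exact: w_eq.
Qed.
End Ens.
End LA.

Theorem mainTheorem5 (R : realFieldType) (m n r : nat)
  (M : 'M[R]_(m, n)) (A : 'M[R]_(m, r)) (W : 'M[R]_(r, n))
  (hM : nonneg_mx M) (hA : nonneg_mx A) (hW : nonneg_mx W)
  (hstab : stable_fact M A W)
  (U : {set 'I_m}) (hU : #|U| = \rank A) (hUind : row_free (rows_of A U)) :
  forall i : 'I_n,
    exists (S : {set 'I_r}) (hS : #|S| = #|U|),
      lin_indep_cols A S /\ col i W = ensemble_mx A hS *m colU M U i.
Proof.
move=> i; case: hstab => [hMAW [hsupp _]].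
have hcol : col i M = A *m col i W.
  by rewrite hMAW; apply/matrixP => a b; rewrite !mxE; apply: eq_bigr => j _; rewrite !mxE.
have hT : admissible_cols A [set: 'I_r] (col i M).
  exists (fun k => W k i); split; first by move=> k; exact: hW.
  rewrite hcol mul_col_sum; apply: eq_big => [k|k _]; first by rewrite in_setT.
  by rewrite mxE.
have [S0 hS0] := @lex_first_exists r (fun S => admissible_cols A S (col i M)) _ hT.
have hz := hsupp i S0 hS0.
have hi := lex_first_indep hS0.
have [S' [hsub [hS'i hS'c]]] := extend_ind erefl hi.
have hS : #|S'| = #|U| by rewrite hS'c hU.
exists S', hS; split => //.
have -> : colU M U i = \col_k (A *m col i W) (enum_val k) 0.
  by apply/matrixP => k b; rewrite (ord1 b) !mxE hMAW !mxE; apply: eq_bigr => j _; rewrite !mxE.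
apply: ens_eq => //.
move=> j hj; rewrite mxE; apply: hz; apply/negP => h; move: hj.
by rewrite (subsetP hsub).
Qed.
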